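(* In the setting below, let $I=\{i_A,\dots,i_B\}\subseteq\{0,\dots,n\}$ and $J=\{j_A,\dots,j_B\}\subseteq\{0,\dots,m\}$ be intervals of equal length $|I|=|J|$ such that every point of $I\times J$ is $2\Delta$-relevant. Then there are $a,b,c\in\mathbb{R}$ such that $|f(i)-(a i+b)|\le 2\Delta$ for all $i\in I$ and $|g(j)-(aj+c)|\le 2\Delta$ for all $j\in J$.
   Context: Setting: $f\colon\{0,\dots,n\}\to\mathbb{Z}$, $g\colon\{0,\dots,m\}\to\mathbb{Z}$, and convex functions $\breve f\colon\{0,\dots,n\}\to\mathbb{Q}$, $\breve g\colon\{0,\dots,m\}\to\mathbb{Q}$ (convex: $F(i)-F(i-1)\le F(i+1)-F(i)$ for interior $i$) with $\breve f\le f\le\breve f+\Delta$ and $\breve g\le g\le\breve g+\Delta$ pointwise, for some $\Delta\ge0$. Let $\breve h(k)=\min_{i+j=k}\breve f(i)+\breve g(j)$. A point $(i,j)$ is $\delta$-relevant if $\breve f(i)+\breve g(j)\le\breve h(i+j)+\delta$. *)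

(* Defs.v *)
From HB Require Import structures.
From mathcomp Require Import all_boot all_order all_algebra.
From mathcomp Require Export reals.
Set Implicit Arguments. Unset Strict Implicit. Unset Printing Implicit Defensive.
Import Order.TTheory GRing.Theory Num.Theory.
Local Open Scope ring_scope.

(* F : {0..n} -> rat, represented as nat -> rat; only values at 0..n matter. *)
Definition convex_on (n : nat) (F : nat -> rat) : Prop :=
  forall i : nat, (0 < i)%N -> (i < n)%N ->
    F i - F i.-1 <= F i.+1 - F i.

(* hb k = min_{i + j = k, 0<=i<=n, 0<=j<=m} fb i + gb j, for k in 0..n+m.
   The index i ranges over [k - m, min n k]; the neutral element of the
   iterated min is itself the value at i = k - m, so this is the exact min. *)
Definition hbreve (n m : nat) (fb gb : nat -> rat) (k : nat) : rat :=
  let lo := (k - m)%N in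
  \big[Num.min/(fb lo + gb (k - lo)%N)]_(lo <= i < (minn n k).+1)
     (fb i + gb (k - i)%N).

Definition relevant (n m : nat) (fb gb : nat -> rat) (delta : rat)
    (i j : nat) : Prop :=
  fb i + gb j <= hbreve n m fb gb (i + j) + delta.

(* Main.v *)
Require Import Defs.
From HB Require Import structures.
From mathcomp Require Import all_boot all_order all_algebra.
From mathcomp Require Import reals ring lra zify.
Import Order.TTheory GRing.Theory Num.Theory.
Local Open Scope ring_scope.

Lemma hb_le (n m : nat) (fb gb : nat -> rat) i j :
  (i <= n)%N -> (j <= m)%N -> hbreve n m fb gb (i + j) <= fb i + gb j.
Proof.
move=> hi hj; rewrite /hbreve.
apply: le_trans.
  apply: (@ge_bigmin_seq _ _ _ _ _ i) => //.
  rewrite mem_index_iota; apply/andP; split; lia.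
by rewrite addKn.
Qed.

Section Conv.
Variables (n : nat) (F : nat -> rat).
Hypothesis cF : convex_on n F.
Let D i := F i.+1 - F i.

Lemma D_mono i j : (i <= j)%N -> (j.+1 <= n)%N -> D i <= D j.
Proof.
elim: j => [|j IH] hij hj.
  by have -> : i = 0%N by lia.
case: (ltngtP i j.+1) => h; last by rewrite h.
  apply: le_trans (IH _ _) _; try lia.
  have := @cF j.+1 isT hj. by rewrite /D.
lia.
Qed.

Lemma up_sum p d : (p + d <= n)%N -> F (p + d) - F p <= d%:R * D (p + d.-1).
Proof.
elim: d => [|d IH] h; first by rewrite addn0 subrr mul0r.
have e : F (p + d.+1) - F p = D (p + d) + (F (p + d) - F p).
  by rewrite /D addnS; lra.
rewrite e /=.
have -> : d.+1%:R = d%:R + 1 :> rat by rewrite -addn1 natrD.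
rewrite mulrDl mul1r addrC lerD2r.
have h1 := IH ltac:(lia).
apply: le_trans h1 _.
rewrite ler_wpM2l //; apply: D_mono; lia.
Qed.

Lemma lo_sum q d : (q + d <= n)%N -> d%:R * D q <= F (q + d) - F q.
Proof.
elim: d => [|d IH] h; first by rewrite addn0 subrr mul0r.
have e : F (q + d.+1) - F q = D (q + d) + (F (q + d) - F q).
  by rewrite /D addnS; lra.
rewrite e.
have -> : d.+1%:R = d%:R + 1 :> rat by rewrite -addn1 natrD.
rewrite mulrDl mul1r addrC.
apply: lerD; last by apply: IH; lia.
apply: D_mono; lia.
Qed.

Lemma chord p q r : (p <= q)%N -> (q <= r)%N -> (r <= n)%N ->
  (F q - F p) * (r - q)%:R <= (F r - F q) * (q - p)%:R.
Proof.
move=> pq qr rn.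
case: (ltngtP p q) => [pq'|//|<-]; last by rewrite subnn mulr0 subrr mul0r.
case: (ltngtP q r) => [qr'|//|<-]; last by rewrite subnn mulr0 subrr mul0r.
have h1 := @up_sum p (q - p)%N ltac:(lia).
have h2 := @lo_sum q (r - q)%N ltac:(lia).
have e1 : (p + (q - p))%N = q by lia.
have e2 : (q + (r - q))%N = r by lia.
rewrite e1 in h1; rewrite e2 in h2.
have e3 : (p + (q - p).-1)%N = q.-1 by lia.
rewrite e3 in h1.
have hD : D q.-1 <= D q by apply: D_mono; lia.
have a0 : 0 <= ((r - q)%:R : rat) by [].
have b0 : 0 <= ((q - p)%:R : rat) by [].
apply: (@le_trans _ _ ((q - p)%:R * D q.-1 * (r - q)%:R)).
  by rewrite ler_wpM2r.
apply: (@le_trans _ _ ((q - p)%:R * ((r - q)%:R * D q))); last first.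
  by rewrite mulrC; apply: ler_wpM2r.
rewrite -mulrA ler_wpM2l // mulrC ler_wpM2l //.
all: move=> *; lia.
Qed.
End Conv.
Lemma lowers (L t A0 A1 B0 B1 X Y D : rat) :
  0 <= t -> t <= L ->
  L * Y <= L * B0 + (L - t) * (B1 - B0) ->
  L * X <= L * A0 + t * (A1 - A0) ->
  A0 + B1 <= X + Y + 2 * D -> A1 + B0 <= X + Y + 2 * D ->
  L * A0 + t * (A1 - A0) - 2 * D * L <= L * X /\
  L * B0 + (L - t) * (B1 - B0) - 2 * D * L <= L * Y.
Proof.
move=> t0 tL uY uX r0 r1.
have p0 := ler_wpM2l (x := L - t) ltac:(lra) r0.
have p1 := ler_wpM2l (x := t) t0 r1.
split; lra.
Qed.

Lemma fin_bound (L t A0 S S' D F X : rat) :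
  0 < L -> 0 <= t -> t <= L -> 0 <= D -> -(2 * D) <= S - S' <= 2 * D ->
  L * X <= L * A0 + t * S -> L * A0 + t * S - 2 * D * L <= L * X ->
  X <= F <= X + D ->
  `|F - (A0 + t * ((S + S') / (2 * L)) + (S - S') / 4 - D / 2)| <= 2 * D.
Proof.
move=> L0 t0 tL D0 /andP[e1 e2] u l /andP[F1 F2].
have eq : L * (F - (A0 + t * ((S + S') / (2 * L)) + (S - S') / 4 - D / 2)) =
   L * F - L * A0 - t * (S + S') / 2 - L * (S - S') / 4 + L * D / 2.
  by field; rewrite lt0r_neq0.
have pF1 := ler_wpM2l (ltW L0) F1.
have pF2 := ler_wpM2l (ltW L0) F2.
have q1 : 0 <= (2 * D - (S - S')) * (L + (2 * t - L)) by apply: mulr_ge0; lra.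
have q2 : 0 <= (2 * D + (S - S')) * (L - (2 * t - L)) by apply: mulr_ge0; lra.
have q3 : 0 <= (2 * D - (S - S')) * (L - (2 * t - L)) by apply: mulr_ge0; lra.
have q4 : 0 <= (2 * D + (S - S')) * (L + (2 * t - L)) by apply: mulr_ge0; lra.
rewrite ler_norml; apply/andP; split; rewrite -(ler_pM2l L0) eq; lra.
Qed.

Lemma ar1 (L t x a b : rat) : (x - a) * (L - t) <= (b - x) * t -> L * x <= L * a + t * (b - a).
Proof. lra. Qed.
Lemma ar2 (L t y a b : rat) : (y - a) * t <= (b - y) * (L - t) -> L * y <= L * a + (L - t) * (b - a).
Proof. lra. Qed.

Lemma natfacts (iA iB jA jB n m t : nat) : (iA <= iB)%N -> (iB <= n)%N -> (jA <= jB)%N -> (jB <= m)%N ->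
  (iB - iA)%N = (jB - jA)%N -> (t <= iB - iA)%N ->
  [/\ (iA <= iA + t)%N, (iA + t <= iB)%N, (jA <= jB - t)%N & (jB - t <= jB)%N] /\
   [/\  (iB - (iA + t))%N = (iB - iA - t)%N, (iA + t - iA)%N = t,
      (jB - (jB - t))%N = t & (jB - t - jA)%N = (iB - iA - t)%N] /\
  [/\ (iA + t + (jB - t) = iA + jB)%N, (iA + t <= n)%N & (jB - t <= m)%N].
Proof. move=> *; split; [|split]; split; lia. Qed.

Lemma core (n m : nat)
    (f g : nat -> int) (fb gb : nat -> rat) (Delta : rat)
    (iA iB jA jB : nat) :
  0 <= Delta ->
  convex_on n fb -> convex_on m gb ->
  (forall i, (i <= n)%N -> fb i <= (f i)%:~R <= fb i + Delta) ->
  (forall j, (j <= m)%N -> gb j <= (g j)%:~R <= gb j + Delta) ->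
  (iA <= iB)%N -> (iB <= n)%N -> (jA <= jB)%N -> (jB <= m)%N ->
  (iB - iA)%N = (jB - jA)%N ->
  (forall i j, (iA <= i <= iB)%N -> (jA <= j <= jB)%N ->
     relevant n m fb gb (2 * Delta) i j) ->
  (0 < iB - iA)%N ->
  exists a b c : rat,
    (forall i, (iA <= i <= iB)%N ->
       `|(f i)%:~R - (a * i%:R + b)| <= 2 * Delta) /\
    (forall j, (jA <= j <= jB)%N ->
       `|(g j)%:~R - (a * j%:R + c)| <= 2 * Delta).
Proof.
move=> D0 cf cg hf hg hAB hBn hAB' hBm hL hrel Lpos.
set L := (iB - iA)%N in hL Lpos.
have Lr0 : 0 < (L%:R : rat) by rewrite ltr0n.
have hk : (iB + jA = iA + jB)%N by lia.
have hbk : forall i j, (i + j = iA + jB)%N -> (i <= n)%N -> (j <= m)%N ->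
    hbreve n m fb gb (iA + jB) <= fb i + gb j.
  by move=> i j <- *; apply: hb_le.
have r0 : fb iA + gb jB <= hbreve n m fb gb (iA + jB) + 2 * Delta.
  apply: hrel; apply/andP; split => //; lia.
have r1 : fb iB + gb jA <= hbreve n m fb gb (iA + jB) + 2 * Delta.
  rewrite -hk; apply: hrel; apply/andP; split => //; lia.
have s0 := hbk iA jB erefl ltac:(lia) hBm.
have s1 := hbk iB jA hk hBn ltac:(lia).
have pt : forall t, (t <= L)%N ->
   [/\ L%:R * fb (iA + t)%N <= L%:R * fb iA + t%:R * (fb iB - fb iA),
       L%:R * fb iA + t%:R * (fb iB - fb iA) - 2 * Delta * L%:R <= L%:R * fb (iA + t)%N,
       L%:R * gb (jB - t)%N <= L%:R * gb jA + (L%:R - t%:R) * (gb jB - gb jA) &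
       L%:R * gb jA + (L%:R - t%:R) * (gb jB - gb jA) - 2 * Delta * L%:R <= L%:R * gb (jB - t)%N].
  move=> t tL.
  have [[p1 p2 p3 p4] [[e1 e2 e3 e4] [n1 n2 n3]]] := @natfacts iA iB jA jB n m t hAB hBn hAB' hBm hL tL.
  have c1 := @chord _ _ cf iA (iA + t)%N iB p1 p2 hBn.
  have c2 := @chord _ _ cg jA (jB - t)%N jB p3 p4 hBm.
  rewrite e1 e2 natrB // in c1; rewrite e3 e4 natrB // in c2.
  have uX : L%:R * fb (iA + t)%N <= L%:R * fb iA + t%:R * (fb iB - fb iA) by apply: ar1.
  have uY : L%:R * gb (jB - t)%N <= L%:R * gb jA + (L%:R - t%:R) * (gb jB - gb jA) by apply: ar2.
  have q0 := hbk (iA + t)%N (jB - t)%N n1 n2 n3.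
  have t0 : 0 <= (t%:R : rat) by [].
  have tL' : (t%:R : rat) <= L%:R by rewrite ler_nat.
  have h0 : fb iA + gb jB <= fb (iA+t)%N + gb (jB-t)%N + 2 * Delta.
    by apply: le_trans r0 _; rewrite lerD2r.
  have h1 : fb iB + gb jA <= fb (iA+t)%N + gb (jB-t)%N + 2 * Delta.
    by apply: le_trans r1 _; rewrite lerD2r.
  have [l1 l2] := @lowers L%:R t%:R (fb iA) (fb iB) (gb jA) (gb jB) (fb (iA+t)%N) (gb (jB-t)%N) Delta t0 tL' uY uX h0 h1.
  by split.
set A0 := fb iA in r0 r1 s0 s1 pt *; set A1 := fb iB in r0 r1 s0 s1 pt *.
set B0 := gb jA in r0 r1 s0 s1 pt *; set B1 := gb jB in r0 r1 s0 s1 pt *.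
have eb : -(2 * Delta) <= (A1 - A0) - (B1 - B0) <= 2 * Delta.
  apply/andP; split; lra.
have eb' : -(2 * Delta) <= (B1 - B0) - (A1 - A0) <= 2 * Delta.
  apply/andP; split; lra.
pose a := ((A1 - A0) + (B1 - B0)) / (2 * L%:R).
exists a, (A0 - a * iA%:R + ((A1 - A0) - (B1 - B0)) / 4 - Delta / 2),
          (B0 - a * jA%:R + ((B1 - B0) - (A1 - A0)) / 4 - Delta / 2).
split.
  move=> i hi.
  have -> : i = (iA + (i - iA))%N by clear -hi; lia.
  have tL : (i - iA <= L)%N by clear -hi; lia.
  have [u l _ _] := pt _ tL.
  have -> : a * (iA + (i - iA))%:R + (A0 - a * iA%:R + (A1 - A0 - (B1 - B0)) / 4 - Delta / 2)
     = A0 + (i - iA)%:R * ((A1 - A0 + (B1 - B0)) / (2 * L%:R)) + (A1 - A0 - (B1 - B0)) / 4 - Delta / 2.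
    by rewrite natrD /a; ring.
  apply: fin_bound Lr0 _ _ D0 eb u l _ => //.
    by rewrite ler_nat.
  by apply: hf; clear -hi hBn; lia.
move=> j hj.
have hjL : (j - jA <= L)%N by clear -hj hL; lia.
have tL : (L - (j - jA) <= L)%N by apply: leq_subr.
have ej : (jB - (L - (j - jA)))%N = j by clear -hj hL; lia.
have [_ _ u l] := pt _ tL.
rewrite ej in u l.
have es : (L%:R - (L - (j - jA))%:R : rat) = (j - jA)%:R.
  by rewrite (natrB _ hjL); ring.
rewrite es in u l.
have ejj : (j%:R : rat) = jA%:R + (j - jA)%:R.
  by rewrite -natrD subnKC //; case/andP: hj.
have -> : a * j%:R + (B0 - a * jA%:R + (B1 - B0 - (A1 - A0)) / 4 - Delta / 2)
   = B0 + (j - jA)%:R * ((B1 - B0 + (A1 - A0)) / (2 * L%:R)) + (B1 - B0 - (A1 - A0)) / 4 - Delta / 2.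
  by rewrite ejj /a; ring.
apply: fin_bound Lr0 _ _ D0 eb' u l _ => //.
  by rewrite ler_nat.
by apply: hg; clear -hj hBm; lia.
Qed.

Theorem mainTheorem14 (R : realType) (n m : nat)
    (f g : nat -> int) (fb gb : nat -> rat) (Delta : rat)
    (iA iB jA jB : nat) :
  0 <= Delta ->
  convex_on n fb -> convex_on m gb ->
  (forall i, (i <= n)%N -> fb i <= (f i)%:~R <= fb i + Delta) ->
  (forall j, (j <= m)%N -> gb j <= (g j)%:~R <= gb j + Delta) ->
  (iA <= iB)%N -> (iB <= n)%N -> (jA <= jB)%N -> (jB <= m)%N ->
  (iB - iA)%N = (jB - jA)%N ->
  (forall i j, (iA <= i <= iB)%N -> (jA <= j <= jB)%N ->
     relevant n m fb gb (2 * Delta) i j) ->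
  exists a b c : R,
    (forall i, (iA <= i <= iB)%N ->
       `|(f i)%:~R - (a * i%:R + b)| <= 2 * ratr Delta) /\
    (forall j, (jA <= j <= jB)%N ->
       `|(g j)%:~R - (a * j%:R + c)| <= 2 * ratr Delta).
Proof.
move=> D0 cf cg hf hg hAB hBn hAB' hBm hL hrel.
have D0' : 0 <= 2 * (ratr Delta : R) by rewrite mulr_ge0 // ler0q.
case: (posnP (iB - iA)) => [L0|Lp].
  exists 0, (f iA)%:~R, (g jA)%:~R; split => [i hi|j hj].
    have -> : i = iA by clear -hi hAB L0; lia.
    by rewrite mul0r add0r subrr normr0.
  have -> : j = jA by clear -hj hAB' L0 hL; lia.
  by rewrite mul0r add0r subrr normr0.
have [a [b [c [H1 H2]]]] := @core n m f g fb gb Delta iA iB jA jB D0 cf cg hf hg hAB hBn hAB' hBm hL hrel Lp.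
exists (ratr a), (ratr b), (ratr c); split => [i hi|j hj].
  have := H1 i hi.
  by rewrite -(ler_rat R) ratr_norm !rmorphM !rmorphB !rmorphD !rmorphM !rmorph_int !rmorph_nat rmorph1.
have := H2 j hj.
by rewrite -(ler_rat R) ratr_norm !rmorphM !rmorphB !rmorphD !rmorphM !rmorph_int !rmorph_nat rmorph1.
Qed.
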